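(* Let $n\ge 1$ be an integer and $\beta>0$. Let $(s,z)$ be the Nielsen–Olesen vortex profile, i.e. real functions on $(0,\infty)$ solving \begin{align*} &s''+\tfrac{s'}{r}-\big[z^2+\tfrac{\beta}{2}(s^2-1)\big]s=0,\\ &z''+\tfrac{z'}{r}-\tfrac{z}{r^2}-zs^2=0, \end{align*} with $s=s_0r^n(1+o(1))$ and $z=\frac{n}{r}+z_0r+o(r)$ as $r\to 0$, and $s\to 1$, $z\to 0$ exponentially as $r\to\infty$. Then the coefficient $z_0$ in the expansion $z=\frac{n}{r}+z_0r+\dots$ near the origin is negative.
   Context: $s$ is the normalized Higgs magnitude and $z-\frac{n}{r}$ the dimensionless azimuthal $Z$ potential of the Nielsen–Olesen vortex with winding number $n$; $\beta=(M_H/M_Z)^2$. *)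

(* Defs.v *)
From Stdlib Require Import Reals.
From Coquelicot Require Import Coquelicot.
Open Scope R_scope.

Definition NO_equations (beta : R) (s ds dds z dz ddz : R -> R) : Prop :=
  forall r, 0 < r ->
    is_derive s r (ds r) /\ is_derive ds r (dds r) /\
    is_derive z r (dz r) /\ is_derive dz r (ddz r) /\
    dds r + ds r / r - (z r ^ 2 + beta / 2 * (s r ^ 2 - 1)) * s r = 0 /\
    ddz r + dz r / r - z r / r ^ 2 - z r * s r ^ 2 = 0.

Definition s_origin (n : nat) (s0 : R) (s : R -> R) : Prop :=
  exists e : R -> R,
    filterlim e (at_right 0) (locally 0) /\
    forall r, 0 < r -> s r = s0 * r ^ n * (1 + e r).

Definition z_origin (n : nat) (z0 : R) (z : R -> R) : Prop :=
  filterlim (fun r => (z r - INR n / r - z0 * r) / r) (at_right 0) (locally 0).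

Definition exp_decay_infty (s z : R -> R) : Prop :=
  exists C m R0 : R, 0 < m /\
    forall r, R0 <= r ->
      Rabs (s r - 1) <= C * exp (- m * r) /\ Rabs (z r) <= C * exp (- m * r).

(* Main.v *)
Require Import Defs.
From Stdlib Require Import Reals.
From Coquelicot Require Import Coquelicot.
From Stdlib Require Import Lra Psatz.
Open Scope R_scope.

Lemma lim_right0 (f : R -> R) (l : R) :
  filterlim f (at_right 0) (locally l) ->
  forall eps, 0 < eps -> exists d, 0 < d /\ forall x, 0 < x < d -> Rabs (f x - l) < eps.
Proof.
  intros H eps He.
  destruct (proj1 (filterlim_locally f l) H (mkposreal eps He)) as [d Hd].
  exists d. split. apply cond_pos.
  intros x [Hx1 Hx2]. apply (Hd x).
  - unfold ball; simpl; unfold AbsRing_ball, abs, minus, plus, opp; simpl.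
    rewrite Ropp_0, Rplus_0_r, Rabs_pos_eq; lra.
  - exact Hx1.
Qed.

Lemma incr (f f' : R -> R) a b : a < b ->
  (forall c, a <= c <= b -> derivable_pt_lim f c (f' c)) ->
  (forall c, a < c < b -> 0 <= f' c) -> f a <= f b.
Proof.
  intros Hab Hd Hp. destruct (MVT_cor2 f f' a b Hab Hd) as [c [E Hc]].
  specialize (Hp c Hc). nra.
Qed.

Lemma sincr (f f' : R -> R) a b : a < b ->
  (forall c, a <= c <= b -> derivable_pt_lim f c (f' c)) ->
  (forall c, a < c < b -> 0 < f' c) -> f a < f b.
Proof.
  intros Hab Hd Hp. destruct (MVT_cor2 f f' a b Hab Hd) as [c [E Hc]].
  specialize (Hp c Hc). nra.
Qed.

Lemma decr (f f' : R -> R) a b : a < b ->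
  (forall c, a <= c <= b -> derivable_pt_lim f c (f' c)) ->
  (forall c, a < c < b -> f' c <= 0) -> f b <= f a.
Proof.
  intros Hab Hd Hp. destruct (MVT_cor2 f f' a b Hab Hd) as [c [E Hc]].
  specialize (Hp c Hc). nra.
Qed.

Lemma exp_bound (m r : R) : 0 < m -> 0 <= r -> exp (- m * r) * (1 + m * r) <= 1.
Proof.
  intros Hm Hr. pose proof (exp_ineq1_le (m * r)).
  assert (E : exp (- m * r) * exp (m * r) = 1).
  { rewrite <- exp_plus. replace (- m * r + m * r) with 0 by ring. apply exp_0. }
  pose proof (exp_pos (- m * r)). nra.
Qed.

Theorem lemma2 (n : nat) (beta s0 z0 : R) (s ds dds z dz ddz : R -> R) :
  (1 <= n)%nat -> 0 < beta ->
  NO_equations beta s ds dds z dz ddz ->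
  s_origin n s0 s ->
  z_origin n z0 z ->
  exp_decay_infty s z ->
  z0 < 0.
Proof.
  intros Hn Hbeta HNO [e [He Hs]] Hz [C [m [R0 [Hm Hdec]]]].
  assert (HnR : 1 <= INR n) by (apply (le_INR 1); exact Hn).
  assert (Dz : forall r, 0 < r -> derivable_pt_lim z r (dz r)).
  { intros r Hr. apply is_derive_Reals. apply (HNO r Hr). }
  assert (Ddz : forall r, 0 < r -> derivable_pt_lim dz r (ddz r)).
  { intros r Hr. apply is_derive_Reals. apply (HNO r Hr). }
  assert (Eq : forall r, 0 < r -> ddz r = z r / r ^ 2 + z r * s r ^ 2 - dz r / r).
  { intros r Hr. destruct (HNO r Hr) as [_ [_ [_ [_ [_ E]]]]]. lra. }
  assert (Cz : forall r, 0 < r -> continuity_pt z r).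
  { intros r Hr. apply derivable_continuous_pt. exists (dz r). apply Dz; exact Hr. }
  assert (HC : 0 <= C).
  { destruct (Hdec R0 (Rle_refl _)) as [_ H2]. pose proof (Rabs_pos (z R0)).
    pose proof (exp_pos (- m * R0)). nra. }
  assert (Zb : forall r, R0 <= r -> 0 <= r -> Rabs (z r) * (1 + m * r) <= C).
  { intros r Hr Hr0. destruct (Hdec r Hr) as [_ H2]. pose proof (exp_bound m r Hm Hr0).
    assert (0 <= 1 + m * r) by nra. nra. }
  set (q := fun r => (z r - INR n / r - z0 * r) / r).
  assert (Hq : forall eps, 0 < eps -> exists d, 0 < d /\ forall x, 0 < x < d -> Rabs (q x) < eps).
  { intros eps Heps. destruct (lim_right0 _ 0 Hz eps Heps) as [d [Hd Hd']].
    exists d. split; auto. intros x Hx. specialize (Hd' x Hx). rewrite Rminus_0_r in Hd'. exact Hd'. }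
  assert (Qe : forall x, 0 < x -> x * z x = INR n + x ^ 2 * (z0 + q x)).
  { intros x Hx. unfold q. field. lra. }
  assert (N0 : forall eps, 0 < eps -> exists d, 0 < d /\ forall x, 0 < x < d -> Rabs (x * z x - INR n) < eps).
  { intros eps Heps. destruct (Hq 1 Rlt_0_1) as [d [Hd Hd']].
    set (K := Rabs z0 + 1).
    assert (HK : 0 < K) by (unfold K; pose proof (Rabs_pos z0); lra).
    exists (Rmin d (Rmin 1 (eps / K))). split.
    { apply Rmin_glb_lt; auto. apply Rmin_glb_lt; [lra|]. apply Rdiv_lt_0_compat; lra. }
    intros x [Hx1 Hx2].
    assert (x < d) by (eapply Rlt_le_trans; [exact Hx2| apply Rmin_l]).
    assert (x < 1) by (eapply Rlt_le_trans; [exact Hx2| eapply Rle_trans; [apply Rmin_r| apply Rmin_l]]).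
    assert (x < eps / K) by (eapply Rlt_le_trans; [exact Hx2| eapply Rle_trans; [apply Rmin_r| apply Rmin_r]]).
    assert (x * K < eps) by (apply (Rmult_lt_compat_r K) in H1; [field_simplify in H1; lra| lra]).
    rewrite (Qe x Hx1). replace (INR n + x ^ 2 * (z0 + q x) - INR n) with (x ^ 2 * (z0 + q x)) by ring.
    rewrite Rabs_mult. rewrite (Rabs_pos_eq (x^2)) by nra.
    specialize (Hd' x (conj Hx1 H)).
    pose proof (Rabs_triang z0 (q x)).
    assert (Rabs (z0 + q x) <= K) by (unfold K; lra).
    assert (x ^ 2 * Rabs (z0 + q x) <= x ^ 2 * K) by (apply Rmult_le_compat_l; nra).
    nra. }
  assert (Zpos : forall r, 0 < r -> 0 <= z r).
  { intros r1 Hr1. destruct (Rle_or_lt 0 (z r1)) as [|Hneg]; [assumption|exfalso].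
    destruct (N0 (1/2)) as [d [Hd Hd']]; [lra|].
    set (a := Rmin (d/2) (r1/2)).
    assert (Ha : 0 < a) by (apply Rmin_glb_lt; lra).
    assert (Ha1 : a < r1) by (unfold a; pose proof (Rmin_r (d/2) (r1/2)); lra).
    assert (Ha2 : a < d) by (unfold a; pose proof (Rmin_l (d/2) (r1/2)); lra).
    assert (Za : 0 < z a).
    { specialize (Hd' a (conj Ha Ha2)). apply Rabs_def2 in Hd'.
      destruct Hd'. assert (0 < a * z a) by lra. nra. }
    set (eps := - z r1).
    set (b := Rmax (Rmax R0 (r1 + 1)) (C / (m * eps) + 1)).
    assert (Hb1 : R0 <= b) by (unfold b; eapply Rle_trans; [apply Rmax_l|apply Rmax_l]).
    assert (Hb2 : r1 + 1 <= b) by (unfold b; eapply Rle_trans; [apply Rmax_r|apply Rmax_l]).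
    assert (Hb3 : C / (m * eps) + 1 <= b) by (unfold b; apply Rmax_r).
    assert (Zbb : Rabs (z b) < eps).
    { pose proof (Zb b Hb1 ltac:(lra)).
      assert (C < eps * (1 + m * b)).
      { assert (C / (m * eps) * (m * eps) = C) by (field; unfold eps; lra).
        assert (0 < m * eps) by (unfold eps; nra).
        assert (eps * m * b >= eps * m * (C / (m * eps) + 1)).
        { apply Rle_ge. apply Rmult_le_compat_l; [nra| lra]. }
        assert (0 < eps) by (unfold eps; lra).
        nra. }
      pose proof (Rabs_pos (z b)). unfold eps in *. nra. }
    assert (Hab : a <= b) by lra.
    destruct (continuity_ab_min z a b Hab) as [x [Hmin Hx]].
    { intros c Hc. apply Cz. lra. }
    assert (zx : z x <= z r1) by (apply Hmin; lra).
    assert (xa : a < x).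
    { destruct (Req_dec x a) as [E|E]; [subst x; lra| lra]. }
    assert (xb : x < b).
    { destruct (Req_dec x b) as [E|E]; [| lra]. rewrite E in zx.
      apply Rabs_def2 in Zbb. unfold eps in Zbb. lra. }
    assert (Hx0 : 0 < x) by lra.
    assert (dzx : dz x = 0).
    { assert (pr : derivable_pt z x) by (exists (dz x); apply Dz; lra).
      pose proof (deriv_minimum z a b x pr xa xb (fun y H1 H2 => Hmin y (conj (Rlt_le _ _ H1) (Rlt_le _ _ H2)))) as HH.
      rewrite <- HH. symmetry. apply derive_pt_eq_0. apply Dz; lra. }
    assert (ddzx : ddz x < 0).
    { rewrite (Eq x Hx0), dzx. assert (0 < x ^ 2) by nra.
      assert (z x / x ^ 2 < 0).
      { unfold Rdiv. apply Rmult_neg_pos; [lra| apply Rinv_0_lt_compat; lra]. }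
      assert (0 <= s x ^ 2) by nra. nra. }
    destruct (Ddz x Hx0 (- ddz x) ltac:(lra)) as [[del Hdel] Hdl].
    set (h := Rmin del (b - x) / 2).
    assert (h0' : 0 < Rmin del (b - x)) by (apply Rmin_glb_lt; lra).
    assert (h0 : 0 < h) by (unfold h; lra).
    assert (h1 : h < del) by (unfold h; pose proof (Rmin_l del (b - x)); lra).
    assert (h2 : x + h <= b) by (unfold h; pose proof (Rmin_r del (b - x)); lra).
    destruct (MVT_cor2 z dz x (x + h) ltac:(lra)) as [c [E Hc]].
    { intros c Hc. apply Dz. lra. }
    assert (dzc : dz c < 0).
    { assert (Hne : c - x <> 0) by lra.
      assert (Habs : Rabs (c - x) < del) by (rewrite Rabs_pos_eq; simpl; lra).
      specialize (Hdl (c - x) Hne Habs).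
      replace (x + (c - x)) with c in Hdl by ring. rewrite dzx in Hdl.
      apply Rabs_def2 in Hdl. destruct Hdl as [Hl1 Hl2].
      assert (dz c / (c - x) < 0) by lra.
      assert (0 < c - x) by lra.
      apply (Rmult_lt_compat_r (c - x)) in H; [|lra].
      field_simplify in H; lra. }
    assert (z (x + h) < z x) by nra.
    assert (z x <= z (x + h)) by (apply Hmin; lra).
    lra. }
  set (g := fun r => z r / r + dz r).
  assert (Dg : forall r, 0 < r -> derivable_pt_lim g r (z r * s r ^ 2)).
  { intros r Hr. apply is_derive_Reals. unfold g.
    destruct (HNO r Hr) as [_ [_ [Hz1 [Hz2 _]]]].
    auto_derive.
    - repeat split; [exists (dz r); exact Hz1 | lra | exists (ddz r); exact Hz2].
    - replace (Derive (fun x0 => z x0) r) with (dz r) by (symmetry; apply is_derive_unique; exact Hz1).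
      replace (Derive (fun x0 => dz x0) r) with (ddz r) by (symmetry; apply is_derive_unique; exact Hz2).
      rewrite (Eq r Hr). field. lra. }
  assert (Gmono : forall u v, 0 < u -> u <= v -> g u <= g v).
  { intros u v Hu Huv. destruct (Req_dec u v) as [E|E]; [subst; lra|].
    apply (incr g (fun r => z r * s r ^ 2)); [lra| |].
    - intros c Hc. apply Dg. lra.
    - intros c Hc. pose proof (Zpos c ltac:(lra)). nra. }
  set (W := fun k r => r * z r - k * (r * r) / 2).
  assert (DW : forall k r, 0 < r -> derivable_pt_lim (W k) r (r * (g r - k))).
  { intros k r Hr. apply is_derive_Reals. unfold W.
    destruct (HNO r Hr) as [_ [_ [Hz1 _]]].
    auto_derive.
    - exists (dz r); exact Hz1.
    - replace (Derive (fun x0 => z x0) r) with (dz r) by (symmetry; apply is_derive_unique; exact Hz1).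
      unfold g. field. lra. }
  assert (Gneg : forall r, 0 < r -> g r <= 0).
  { intros r1 Hr1. destruct (Rle_or_lt (g r1) 0) as [|Hk]; [assumption|exfalso].
    remember (g r1) as k eqn:Ek.
    set (D := Rabs (C / m - r1 * z r1) + 1).
    set (r := Rmax (Rmax R0 1) (r1 + 2 * D / k)).
    assert (Hr1' : R0 <= r) by (unfold r; eapply Rle_trans; [apply Rmax_l|apply Rmax_l]).
    assert (Hr2 : 1 <= r) by (unfold r; eapply Rle_trans; [apply Rmax_r|apply Rmax_l]).
    assert (Hr3 : r1 + 2 * D / k <= r) by (unfold r; apply Rmax_r).
    clearbody r.
    assert (HD : 0 < D) by (unfold D; pose proof (Rabs_pos (C / m - r1 * z r1)); lra).
    assert (HDk : 0 < 2 * D / k) by (unfold Rdiv; apply Rmult_lt_0_compat; [lra| apply Rinv_0_lt_compat; exact Hk]).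
    idtac.
    assert (Wle : W k r1 <= W k r).
    { apply (incr (W k) (fun r => r * (g r - k))); [lra| |].
      - intros c Hc. apply DW. lra.
      - intros c Hc. assert (k <= g c) by (rewrite Ek; apply Gmono; lra). nra. }
    unfold W in Wle.
    assert (E1 : (r - r1) * (r + r1) >= 2 * D / k * 1).
    { apply Rle_ge. apply Rmult_le_compat; lra. }
    assert (E2 : k * (2 * D / k) = 2 * D) by (field; lra).
    assert (E3 : r * z r >= r1 * z r1 + D) by nra.
    assert (E4 : r * z r <= C / m).
    { pose proof (Zb r Hr1' ltac:(lra)). pose proof (Rabs_pos (z r)).
      pose proof (Rle_abs (z r)).
      assert (m * r * z r <= m * r * Rabs (z r)) by (apply Rmult_le_compat_l; nra).
      assert (m * (r * z r) <= C) by nra.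
      apply (Rmult_le_reg_l m); [lra|]. replace (m * (C / m)) with C by (field; lra). lra. }
    pose proof (Rle_abs (C / m - r1 * z r1)). unfold D in E3. lra. }
  assert (Hs0 : s0 <> 0).
  { intros E0. set (r := Rmax R0 1 + C / m + 1).
    assert (HR0 : R0 <= r).
    { unfold r. pose proof (Rmax_l R0 1). assert (0 <= C / m) by (apply Rdiv_le_0_compat; lra). lra. }
    assert (Hr0 : 1 <= r).
    { unfold r. pose proof (Rmax_r R0 1). assert (0 <= C / m) by (apply Rdiv_le_0_compat; lra). lra. }
    destruct (Hdec r HR0) as [H1 _]. rewrite (Hs r ltac:(lra)), E0 in H1.
    replace (0 * r ^ n * (1 + e r) - 1) with (-1) in H1 by ring.
    rewrite Rabs_Ropp, Rabs_R1 in H1 || (rewrite Rabs_m1 in H1).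
    pose proof (exp_bound m r Hm ltac:(lra)).
    assert (C < m * r).
    { assert (m * (C / m) = C) by (field; lra). unfold r in *.
      pose proof (Rmax_l R0 1). pose proof (Rmax_r R0 1). nra. }
    pose proof (exp_pos (- m * r)). nra. }
  destruct (lim_right0 e 0 He (1/2) ltac:(lra)) as [d1 [Hd1 Hd1']].
  destruct (N0 (1/2) ltac:(lra)) as [d2 [Hd2 Hd2']].
  set (del := Rmin d1 d2).
  assert (Hdel : 0 < del) by (apply Rmin_glb_lt; lra).
  assert (Pos : forall x, 0 < x < del -> 0 < z x * s x ^ 2).
  { intros x [Hx1 Hx2].
    assert (x < d1) by (eapply Rlt_le_trans; [exact Hx2|apply Rmin_l]).
    assert (x < d2) by (eapply Rlt_le_trans; [exact Hx2|apply Rmin_r]).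
    assert (Zx : 0 < z x).
    { specialize (Hd2' x (conj Hx1 H0)). apply Rabs_def2 in Hd2'.
      destruct Hd2'. assert (0 < x * z x) by lra. nra. }
    assert (Sx : s x <> 0).
    { rewrite (Hs x Hx1). specialize (Hd1' x (conj Hx1 H)). rewrite Rminus_0_r in Hd1'.
      apply Rabs_def2 in Hd1'. pose proof (pow_lt x n Hx1).
      apply Rmult_integral_contrapositive_currified; [|lra].
      apply Rmult_integral_contrapositive_currified; lra. }
    assert (0 < s x ^ 2) by (apply pow2_gt_0; exact Sx). nra. }
  set (b0 := del / 4).
  remember (g b0) as c eqn:Ec.
  assert (Hc : c < 0).
  { assert (g b0 < g (del / 2)).
    { apply (sincr g (fun r => z r * s r ^ 2)); [unfold b0; lra| |].
      - intros c0 Hc0. apply Dg. unfold b0 in Hc0. lra.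
      - intros c0 Hc0. apply Pos. unfold b0 in Hc0. lra. }
    pose proof (Gneg (del / 2) ltac:(lra)). rewrite Ec. lra. }
  destruct (Hq (Rmin 1 (- c / 8))) as [dq [Hdq Hdq']].
  { apply Rmin_glb_lt; lra. }
  set (b := Rmin (Rmin b0 1) (dq / 2)).
  assert (Hb0 : b <= b0) by (unfold b; eapply Rle_trans; [apply Rmin_l|apply Rmin_l]).
  assert (Hb1 : b <= 1) by (unfold b; eapply Rle_trans; [apply Rmin_l|apply Rmin_r]).
  assert (Hb2 : b <= dq / 2) by (unfold b; apply Rmin_r).
  assert (Hbp : 0 < b) by (unfold b, b0; repeat apply Rmin_glb_lt; lra).
  clearbody b.
  set (K := Rabs z0 + 1 + Rabs c + 1).
  assert (HK : 0 < K) by (unfold K; pose proof (Rabs_pos z0); pose proof (Rabs_pos c); lra).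
  assert (HKd : K = Rabs z0 + 1 + Rabs c + 1) by reflexivity.
  clearbody K.
  set (a := Rmin (b / 2) ((- c) * (b * b) / 16 / K)).
  assert (Ha0 : 0 < a).
  { unfold a. apply Rmin_glb_lt; [lra|]. apply Rdiv_lt_0_compat; [|lra].
    apply Rdiv_lt_0_compat; [|lra]. assert (0 < b * b) by nra. nra. }
  assert (Ha1 : a <= b / 2) by (unfold a; apply Rmin_l).
  assert (Ha2 : a * K <= (- c) * (b * b) / 16).
  { unfold a. pose proof (Rmin_r (b / 2) ((- c) * (b * b) / 16 / K)).
    apply (Rmult_le_compat_r K) in H; [|lra].
    replace ((- c) * (b * b) / 16 / K * K) with ((- c) * (b * b) / 16) in H by (field; lra). exact H. }
  assert (Hle : W c b <= W c a).
  { apply (decr (W c) (fun r => r * (g r - c))); [lra| |].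
    - intros x Hx. apply DW. lra.
    - intros x Hx. assert (g x <= c) by (apply (Rle_trans _ (g b0)); [apply Gmono; unfold b0 in *; lra | rewrite Ec; lra]). nra. }
  unfold W in Hle.
  rewrite (Qe a Ha0), (Qe b Hbp) in Hle.
  assert (qb : Rabs (q b) < - c / 8).
  { eapply Rlt_le_trans; [apply Hdq'; lra| apply Rmin_r]. }
  assert (qa : Rabs (q a) < 1).
  { eapply Rlt_le_trans; [apply Hdq'; lra| apply Rmin_l]. }
  apply Rabs_def2 in qb. apply Rabs_def2 in qa.
  destruct (Rlt_or_le z0 0) as [|Hz0]; [assumption|exfalso].
  assert (L1 : b * b * (- 3 * c / 8) <= b ^ 2 * (z0 + q b) - c * (b * b) / 2) by nra.
  assert (L2 : a ^ 2 * (z0 + q a) - c * (a * a) / 2 <= a * a * K).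
  { pose proof (Rle_abs z0). pose proof (Rle_abs c). pose proof (Rle_abs (-c)).
    rewrite Rabs_Ropp in H1.
    assert (z0 + q a - c / 2 <= K) by (rewrite HKd; lra). assert (0 <= a * a) by nra. nra. }
  assert (L3 : a * a * K <= a * K) by (assert (a <= 1) by lra; nra).
  assert (0 < b * b) by nra.
  nra.
Qed.
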